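(* Let $m\equiv3\pmod8$ and $\mathfrak n_m^{(p_+,p_-)}=(\mathfrak v_m^+)^{p_+}\oplus(\mathfrak v_m^-)^{p_-}\oplus\mathbb R^m$. If ${\rm Lag}(\mathfrak n_m^{(p_+,p_-)})\neq\emptyset$, then $p_+=p_-$.
   Context: $C(m)$ is the real Clifford algebra of $\mathbb R^m$ (relations $z^2=-\langle z,z\rangle1$). For $m\equiv3\pmod4$, with $z_1,\dots,z_m$ a fixed orthonormal basis and $K_m=J_{z_1}\cdots J_{z_m}$, there are two irreducible $C(m)$-modules up to isomorphism, $\mathfrak v_m^\pm$, on which $K_m$ acts as $\pm\mathrm{Id}$. Modules carry inner products making each $J_z$ skew-symmetric, and $\mathfrak n_m^{(p_+,p_-)}$ is the Lie algebra of Heisenberg type with $\mathbb R^m$ central and $\langle z,[u,v]\rangle=(J_zu,v)$ on $\mathfrak v=(\mathfrak v_m^+)^{p_+}\oplus(\mathfrak v_m^-)^{p_-}$. ${\rm Lag}(\mathfrak n)$ is the set of subspaces $\mathcal L\subset\mathfrak v$ with $[\mathcal L,\mathcal L]=0$ and $\dim\mathcal L=\frac12\dim\mathfrak v$. *)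

(* Defs.v *)
From HB Require Import structures.
From mathcomp Require Import all_boot all_order all_algebra.
From mathcomp Require Import reals.
Set Implicit Arguments. Unset Strict Implicit. Unset Printing Implicit Defensive.
Import Order.TTheory GRing.Theory Num.Theory.
Local Open Scope ring_scope.

(* A representation of the real Clifford algebra C(m) on the inner product
   space R^n (row vectors, standard inner product (u,v) = u *m v^T) is given by
   J : 'I_m -> 'M[R]_n, where J i is the matrix of J_{z_i} (z_1..z_m the fixed
   orthonormal basis of R^m) acting on the RIGHT of row vectors:
   J_{z_i}(u) = u *m J i. *)

Section Clifford.
Variable R : realType.

(* Clifford relations: J_{z_i} J_{z_j} + J_{z_j} J_{z_i} = -2 <z_i,z_j> Id,
   equivalent (by bilinearity) to z^2 = -<z,z> 1 for all z. *)
Definition clifford_rel (m n : nat) (J : 'I_m -> 'M[R]_n) : Prop :=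
  forall i j : 'I_m,
    J i *m J j + J j *m J i = - ((2 * (i == j)%:R) *: 1%:M).

Definition skew_rep (m n : nat) (J : 'I_m -> 'M[R]_n) : Prop :=
  forall i, (J i)^T = - J i.

Definition invariant_sub (m n : nat) (J : 'I_m -> 'M[R]_n) (U : 'M[R]_n) : Prop :=
  forall i, (U *m J i <= U)%MS.

Definition irreducible_rep (m n : nat) (J : 'I_m -> 'M[R]_n) : Prop :=
  (0 < n)%N /\
  forall U : 'M[R]_n, invariant_sub J U -> \rank U = 0%N \/ \rank U = n.

(* Matrix of the operator K_m = J_{z_1} o J_{z_2} o ... o J_{z_m}.
   With right action, u |-> K_m(u) is u *m (J_m *m ... *m J_1). *)
Definition Kmat (m n : nat) (J : 'I_m -> 'M[R]_n) : 'M[R]_n :=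
  foldl (fun acc i => J i *m acc) 1%:M (enum 'I_m).

Definition clifford_module (m n : nat) (J : 'I_m -> 'M[R]_n) : Prop :=
  clifford_rel J /\ skew_rep J.

(* v_m^+ (s = true) / v_m^- (s = false): irreducible module with K_m = +-Id *)
Definition irr_module_sign (m n : nat) (J : 'I_m -> 'M[R]_n) (s : bool) : Prop :=
  clifford_module J /\ irreducible_rep J /\
  Kmat J = (if s then 1%:M else - 1%:M).

Definition sum_dim (d e p q : nat) : nat :=
  (\sum_(k < p) d + \sum_(k < q) e)%N.

Definition sum_rep (m d e : nat) (Jp : 'I_m -> 'M[R]_d) (Jm : 'I_m -> 'M[R]_e)
  (p q : nat) : 'I_m -> 'M[R]_(sum_dim d e p q) :=
  fun i => block_mx (@mxdiag R p (fun _ => d) (fun _ => Jp i)) 0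
                    0 (@mxdiag R q (fun _ => e) (fun _ => Jm i)).

(* Lie bracket of the H-type algebra on v, with values in the centre R^m
   (coordinates in the orthonormal basis z_i): <z_i,[u,v]> = (J_{z_i} u, v). *)
Definition hbracket (m n : nat) (J : 'I_m -> 'M[R]_n) (u v : 'rV[R]_n) : 'rV[R]_m :=
  \row_i (u *m J i *m v^T) 0 0.

Definition is_lagrangian (m n : nat) (J : 'I_m -> 'M[R]_n) (L : 'M[R]_n) : Prop :=
  (forall u v : 'rV[R]_n, (u <= L)%MS -> (v <= L)%MS -> hbracket J u v = 0)
  /\ (2 * \rank L)%N = n.

Definition Lag_nonempty (m n : nat) (J : 'I_m -> 'M[R]_n) : Prop :=
  exists L : 'M[R]_n, is_lagrangian J L.

End Clifford.

(* Main.v *)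
Require Import Defs.
From HB Require Import structures.
From mathcomp Require Import all_boot all_order all_algebra.
From mathcomp Require Import reals.
From mathcomp Require Import zify.
Set Implicit Arguments. Unset Strict Implicit. Unset Printing Implicit Defensive.
Import Order.TTheory GRing.Theory Num.Theory.
Local Open Scope ring_scope.


Section PartB.
Variable R : realType.
Variable m : nat.

Definition Afun n (J : 'I_m -> 'M[R]_n) (s : seq 'I_m) : 'M[R]_n :=
  foldr (fun i acc => J i *m acc) 1%:M s.

Lemma cliff_sq n (J : 'I_m -> 'M[R]_n) : clifford_rel J -> forall i, J i *m J i = - 1%:M.
Proof.
move=> H i; have := H i i; rewrite eqxx mulr1 -mulr2n -scaler_nat.
move=> E; have := congr1 (fun X => (2:R)^-1 *: X) E.
rewrite /= scalerA mulVf ?pnatr_eq0 // scale1r => ->.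
by rewrite scalerN scalerA mulVf ?pnatr_eq0 // scale1r.
Qed.

Lemma cliff_anti n (J : 'I_m -> 'M[R]_n) : clifford_rel J ->
  forall i j, i != j -> J i *m J j = - (J j *m J i).
Proof.
move=> H i j nij; have := H i j; rewrite (negbTE nij) mulr0 scale0r oppr0.
by move/eqP; rewrite addr_eq0 => /eqP.
Qed.

Lemma Afun_comm n (J : 'I_m -> 'M[R]_n) : clifford_rel J -> forall j s,
  J j *m Afun J s = (-1) ^+ (count (predC1 j) s) *: (Afun J s *m J j).
Proof.
move=> H j; elim=> [|i s IH] /=; first by rewrite mul1mx mulmx1 expr0 scale1r.
rewrite /Afun /= -/(Afun J s). rewrite (mulmxA (J j)); case: (eqVneq i j) => [->|nij] /=.
  by rewrite add0n -!mulmxA IH !scalemxAr.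
rewrite (cliff_anti H (i:=j) (j:=i)); last by rewrite eq_sym.
by rewrite mulNmx -!mulmxA IH exprS mulN1r scaleNr !scalemxAr.
Qed.

Lemma Afun_tr0 n (J : 'I_m -> 'M[R]_n) : clifford_rel J -> forall j s,
  odd (count (predC1 j) s) -> \tr (Afun J s) = 0.
Proof.
move=> H j s odds; have C := Afun_comm H j s.
rewrite -signr_odd odds expr1 scaleN1r in C.
have E : Afun J s = - (Afun J s *m J j *m J j).
  by rewrite -mulmxA cliff_sq // mulmxN mulmx1 opprK.
have : \tr (Afun J s *m J j *m J j) = - \tr (Afun J s *m J j *m J j).
  by rewrite {1}mxtrace_mulC mulmxA C mulNmx raddfN.
move=> h; have x0 : \tr (Afun J s *m J j *m J j) = 0.
  by move/eqP: h; rewrite -subr_eq0 opprK -mulr2n mulrn_eq0 /= => /eqP.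
by rewrite {1}E raddfN; apply/eqP; rewrite oppr_eq0; apply/eqP; exact: x0.
Qed.

Lemma count_notin (j : 'I_m) s : j \notin s -> count (predC1 j) s = size s.
Proof.
elim: s => [|x s IH] //=; rewrite in_cons negb_or => /andP [nx ns].
by rewrite IH // eq_sym nx.
Qed.

Lemma exists_odd_j (s : seq 'I_m) : uniq s -> (0 < size s < m)%N ->
  exists j, odd (count (predC1 j) s).
Proof.
move=> us /andP [s0 sm].
case Hodd: (odd (size s)).
  case: (pickP (fun j => j \notin s)) => [j /= Hj | Hall].
    by exists j; rewrite count_notin.
  have : (size (enum 'I_m) <= size s)%N.
    apply: uniq_leq_size; first exact: enum_uniq.
    by move=> x _; move: (Hall x) => /= /negbFE.
  by rewrite size_enum_ord leqNgt sm.
case: s us s0 Hodd {sm} => [|j s] //= /andP [nj _] _ Hodd.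
by exists j; rewrite eqxx /= count_notin // add0n; move: Hodd; case: (odd _).
Qed.


Section Intertwine.
Variables (d e : nat) (Jp : 'I_m -> 'M[R]_d) (Jm : 'I_m -> 'M[R]_e).

Definition Bfun (s : seq 'I_m) : 'M[R]_e := foldr (fun i acc => acc *m Jm i) 1%:M s.
Definition Sop i (Y : 'M[R]_(d, e)) := Jp i *m Y *m Jm i.
Fixpoint Pi (t : seq 'I_m) (X : 'M[R]_(d, e)) : 'M[R]_(d, e) :=
  if t is i :: t' then Pi t' X + Sop i (Pi t' X) else X.
Fixpoint Subs (t : seq 'I_m) : seq (seq 'I_m) :=
  if t is i :: t' then Subs t' ++ map (cons i) (Subs t') else [:: [::]].

Lemma Pi_sum t X : Pi t X = \sum_(s <- Subs t) Afun Jp s *m X *m Bfun s.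
Proof.
elim: t => [|i t IH] /=; first by rewrite big_seq1 /Afun /Bfun /= mul1mx mulmx1.
rewrite big_cat big_map /= IH /Sop; congr (_ + _).
rewrite mulmx_sumr mulmx_suml; apply: eq_bigr => s _.
by rewrite /Afun /Bfun /= -/(Afun Jp s) -/(Bfun s) !mulmxA.
Qed.

Hypothesis cp : clifford_rel Jp.
Hypothesis cm : clifford_rel Jm.

Lemma Sop_inv i Y : Sop i (Sop i Y) = Y.
Proof.
rewrite /Sop !mulmxA (cliff_sq cp) -!mulmxA (cliff_sq cm).
by rewrite mulmxN mulmx1 mulNmx mul1mx opprK.
Qed.

Lemma Sop_comm i j Y : Sop i (Sop j Y) = Sop j (Sop i Y).
Proof.
case: (eqVneq i j) => [->//|nij].
rewrite /Sop !mulmxA (cliff_anti cp nij) -!mulmxA (cliff_anti cm (i:=j) (j:=i)); last by rewrite eq_sym.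
by rewrite mulmxN mulNmx mulmxN opprK !mulmxA.
Qed.

Lemma Sop_add i Y Z : Sop i (Y + Z) = Sop i Y + Sop i Z.
Proof. by rewrite /Sop mulmxDr mulmxDl. Qed.

Lemma Pi_fix t X j : j \in t -> Sop j (Pi t X) = Pi t X.
Proof.
elim: t => [|i t IH] //=; rewrite in_cons.
case: (eqVneq j i) => [->|nji] /=.
  by rewrite Sop_add Sop_inv addrC.
by move=> jt; rewrite Sop_add Sop_comm IH.
Qed.


Lemma entry_delta (A : 'M[R]_d) (B : 'M[R]_e) a b :
  (A *m delta_mx a b *m B) a b = A a a * B b b.
Proof.
rewrite !mxE (bigD1 b) //= big1 ?addr0 => [|k nkb].
  congr (_ * _); rewrite mxE (bigD1 a) //= big1 ?addr0 => [|l nla].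
    by rewrite mxE !eqxx mulr1.
  by rewrite mxE (negbTE nla) mulr0.
rewrite mxE big1 ?mul0r // => l _.
by rewrite mxE (negbTE nkb) andbF mulr0.
Qed.

Lemma tau_Pi t : \sum_(a < d) \sum_(b < e) (Pi t (delta_mx a b)) a b =
  \sum_(s <- Subs t) \tr (Afun Jp s) * \tr (Bfun s).
Proof.
under eq_bigr do under eq_bigr do rewrite Pi_sum summxE.
under eq_bigr do rewrite exchange_big /=.
rewrite exchange_big /=; apply: eq_bigr => s _.
rewrite /mxtrace mulr_suml; apply: eq_bigr => a _.
rewrite mulr_sumr; apply: eq_bigr => b _.
by rewrite entry_delta.
Qed.

Lemma Subs_head t : exists rest, Subs t = [::] :: rest.
Proof.
elim: t => [|i t [rest IH]] /=; first by exists [::].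
by rewrite IH; eexists.
Qed.

Lemma Subs_subseq t s : s \in Subs t -> subseq s t.
Proof.
elim: t s => [|i t IH] s /=; first by rewrite inE => /eqP ->.
rewrite mem_cat => /orP [/IH st|/mapP [s' /IH st ->]].
  exact: (subseq_trans st (subseq_cons t i)).
by rewrite /= eqxx.
Qed.

Hypothesis sm : skew_rep Jm.

Lemma Bfun_tr s : (Bfun s)^T = (-1) ^+ (size s) *: Afun Jm s.
Proof.
elim: s => [|i s IH] /=; first by rewrite /Bfun /Afun /= trmx1 expr0 scale1r.
rewrite /Bfun /= -/(Bfun s) trmx_mul IH sm /Afun /= -/(Afun Jm s).
by rewrite mulNmx -scalemxAr exprS mulN1r scaleNr.
Qed.

End Intertwine.


Lemma Afun_full n (J : 'I_m -> 'M[R]_n) : Afun J (rev (enum 'I_m)) = Kmat J.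
Proof.
have -> : Kmat J = foldl (fun acc i => J i *m acc) 1%:M (rev (rev (enum 'I_m))).
  by rewrite revK.
by rewrite foldl_rev.
Qed.

Lemma term_ge0 d e (Jp : 'I_m -> 'M[R]_d) (Jm : 'I_m -> 'M[R]_e) :
  odd m -> irr_module_sign Jp true -> irr_module_sign Jm false ->
  forall s, s \in Subs (rev (enum 'I_m)) ->
  0 <= \tr (Afun Jp s) * \tr (Bfun Jm s).
Proof.
move=> om [[cp sp] [_ Kp]] [[cm sm] [_ Km]] s Hs.
have sst := Subs_subseq Hs.
have us : uniq s by apply: (subseq_uniq sst); rewrite rev_uniq enum_uniq.
have szs : (size s <= m)%N.
  by have := size_subseq sst; rewrite size_rev size_enum_ord.
case: s => [|i s'] in Hs sst us szs *.
  by rewrite /Afun /Bfun /= !mxtrace1 mulr_ge0 ?ler0n.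
case: (eqVneq (size (i :: s')) m) => [Es|Ns].
  have : (i :: s') == rev (enum 'I_m).
    by rewrite -(size_subseq_leqif sst) size_rev size_enum_ord Es.
  move/eqP=> Es'; rewrite Es' Afun_full Kp mxtrace1.
  rewrite -mxtrace_tr Bfun_tr // Afun_full Km size_rev size_enum_ord.
  rewrite -signr_odd om expr1 scaleN1r opprK mxtrace1.
  by rewrite mulr_ge0 ?ler0n.
have [j oj] : exists j, odd (count (predC1 j) (i :: s')).
  by apply: exists_odd_j => //; rewrite /= ltn_neqAle Ns szs.
by rewrite (Afun_tr0 cp oj) mul0r.
Qed.


Lemma dim_eq d e (Jp : 'I_m -> 'M[R]_d) (Jm : 'I_m -> 'M[R]_e) :
  odd m -> irr_module_sign Jp true -> irr_module_sign Jm false -> d = e.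
Proof.
move=> om hp hm.
have hp' := hp; have hm' := hm.
move: hp hm => [[cp sp] [[d0 irrp] Kp]] [[cm sm] [[e0 irrm] Km]].
set t := rev (enum 'I_m).
have pos : 0 < \sum_(s <- Subs t) \tr (Afun Jp s) * \tr (Bfun Jm s).
  have [rest E] := Subs_head t.
  rewrite E big_cons /Afun /Bfun /= !mxtrace1.
  apply: ltr_pwDl; first by rewrite mulr_gt0 // ltr0n.
  rewrite big_seq; apply: sumr_ge0 => s Hs.
  by apply: (term_ge0 om hp' hm'); rewrite E in_cons Hs orbT.
have [a [b nz]] : exists a b, Pi Jp Jm t (delta_mx a b) != 0.
  case: (boolP [exists a, exists b, Pi Jp Jm t (delta_mx a b) != 0]).
    by move=> /existsP [a /existsP [b H]]; exists a, b.
  move=> H; exfalso; move: pos; rewrite -tau_Pi big1 ?ltxx // => a' _.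
  rewrite big1 // => b' _.
  move: H; rewrite negb_exists => /forallP /(_ a'); rewrite negb_exists.
  by move=> /forallP /(_ b'); rewrite negbK => /eqP ->; rewrite mxE.
set Y := Pi Jp Jm t (delta_mx a b) in nz.
have fixY : forall j, Jp j *m Y = - (Y *m Jm j).
  move=> j; have E : Sop Jp Jm j Y = Y.
    by apply: Pi_fix => //; rewrite mem_rev mem_enum.
  rewrite /Sop in E.
  by rewrite -{1}E !mulmxA (cliff_sq cp) !mulNmx mul1mx.
have rk : \rank Y = d.
  have inv : invariant_sub Jp (kermx Y).
    move=> j; apply/sub_kermxP.
    by rewrite -mulmxA fixY mulmxN mulmxA mulmx_ker mul0mx oppr0.
  case: (irrp _ inv); rewrite mxrank_ker.
    by move/eqP; rewrite subn_eq0 => H; apply/eqP; rewrite eqn_leq rank_leq_row H.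
  move=> H; exfalso; move: nz; rewrite -mxrank_eq0.
  have := rank_leq_row Y; move: H d0; lia.
have inv : invariant_sub Jm <<Y>>%MS.
  move=> j; rewrite genmxE (eqmxMr _ (genmxE Y)).
  have -> : Y *m Jm j = - (Jp j *m Y) by rewrite fixY opprK.
  by rewrite eqmx_opp mulmx_sub.
case: (irrm _ inv); rewrite genmxE rk //.
by move=> d0'; move: d0; rewrite d0'.
Qed.

End PartB.


Section PartA.
Variable R : realType.
Variable m : nat.
Variables (n : nat) (J : 'I_m -> 'M[R]_n).
Hypothesis cJ : clifford_rel J.
Hypothesis sJ : skew_rep J.
Variable i0 : 'I_m.
Variable L : 'M[R]_n.
Hypothesis lagL : is_lagrangian J L.

Lemma cliff_sq' : forall i, J i *m J i = - 1%:M.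
Proof.
move=> i; have := cJ i i; rewrite eqxx mulr1 -mulr2n -scaler_nat.
move=> E; have := congr1 (fun X => (2:R)^-1 *: X) E.
rewrite /= scalerA mulVf ?pnatr_eq0 // scale1r => ->.
by rewrite scalerN scalerA mulVf ?pnatr_eq0 // scale1r.
Qed.

Lemma cliff_anti' i j : i != j -> J i *m J j = - (J j *m J i).
Proof.
move=> nij; have := cJ i j; rewrite (negbTE nij) mulr0 scale0r oppr0.
by move/eqP; rewrite addr_eq0 => /eqP.
Qed.

Lemma brk (u v : 'rV[R]_n) i : (u <= L)%MS -> (v <= L)%MS -> u *m J i *m v^T = 0.
Proof.
move=> uL vL; have := lagL.1 _ _ uL vL.
move/(congr1 (fun r : 'rV[R]_m => r 0 i)); rewrite !mxE => h.
by apply/matrixP => x y; rewrite !ord1 mxE h mxE.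
Qed.

Lemma sq0 (x : 'rV[R]_n) : x *m x^T = 0 -> x = 0.
Proof.
move=> h; have : (x *m x^T) 0 0 = 0 by rewrite h mxE.
rewrite mxE => h2; apply/rowP => k; rewrite mxE.
have H0 : forall i, true -> 0 <= x 0 i * x^T i 0.
  by move=> i _; rewrite mxE -expr2 sqr_ge0.
have := psumr_eq0P H0 h2 (i := k) isT.
by rewrite mxE => /eqP; rewrite mulf_eq0 orbb => /eqP.
Qed.


Let M := L *m J i0.

Lemma ortho (u w : 'rV[R]_n) : (u <= L)%MS -> (w <= M)%MS -> u *m w^T = 0.
Proof.
move=> uL /submxP [D ->]; rewrite /M mulmxA trmx_mul sJ mulmxA mulmxN.
by rewrite mulNmx brk ?oppr0 // mulmx_sub.
Qed.

Lemma capLM : (L :&: M = 0)%MS.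
Proof.
apply/eqP; rewrite -submx0; apply/row_subP => k.
set x := row k (L :&: M)%MS.
have xLM : (x <= L :&: M)%MS by apply: row_sub.
have xL : (x <= L)%MS by move: xLM; rewrite sub_capmx => /andP [].
have xM : (x <= M)%MS by move: xLM; rewrite sub_capmx => /andP [].
by rewrite (sq0 (ortho xL xM)) sub0mx.
Qed.

Lemma J0unit : J i0 \in unitmx.
Proof.
have : J i0 *m (- J i0) = 1%:M by rewrite mulmxN cliff_sq' opprK.
by case/mulmx1_unit.
Qed.

Lemma fullLM : row_full (L + M)%MS.
Proof.
rewrite /row_full mxrank_disjoint_sum ?capLM // /M mxrankMfree; last by rewrite row_free_unit J0unit.
by rewrite addnn -mul2n lagL.2.
Qed.

Lemma inM (z : 'rV[R]_n) : (forall u : 'rV[R]_n, (u <= L)%MS -> u *m z^T = 0) -> (z <= M)%MS.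
Proof.
move=> Hz.
have full : (z <= L + M)%MS by apply: submx_full; exact: fullLM.
have zy : (z - z *m proj_mx L M <= M)%MS by exact: proj_mx_compl_sub full.
have yL : (z *m proj_mx L M <= L)%MS by exact: proj_mx_sub.
move: zy yL; move: (z *m proj_mx L M) => y zy yL.
have y0 : y = 0.
  apply: sq0.
  have E : y = z - (z - y) by rewrite opprB addrC subrK.
  have : y *m (z - (z - y))^T = 0.
    by rewrite raddfB /= mulmxBr Hz // ortho // subrr.
  by rewrite -E.
by move: zy; rewrite y0 subr0.
Qed.

Lemma LJ_M i : (L *m J i <= M)%MS.
Proof.
apply/row_subP => k; rewrite row_mul; apply: inM => u uL.
by rewrite trmx_mul sJ mulNmx mulmxN mulmxA brk ?oppr0 // row_sub.
Qed.

Lemma MJ_L i : (M *m J i <= L)%MS.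
Proof.
case: (eqVneq i i0) => [->|ni].
  by rewrite /M -mulmxA cliff_sq' mulmxN mulmx1 eqmx_opp.
rewrite /M -mulmxA (cliff_anti' (i:=i0) (j:=i)); last by rewrite eq_sym.
rewrite mulmxN eqmx_opp mulmxA.
apply: submx_trans (submxMr _ (LJ_M i)) _.
by rewrite /M -mulmxA cliff_sq' mulmxN mulmx1 eqmx_opp.
Qed.

Definition sw (b : bool) (A : 'M[R]_n) :=
  (L *m A <= if b then M else L)%MS && (M *m A <= if b then L else M)%MS.

Lemma sw_step b A i : sw b A -> sw (~~ b) (J i *m A).
Proof.
case/andP=> h1 h2; apply/andP; split; rewrite mulmxA.
  by apply: submx_trans (submxMr _ (LJ_M i)) _; case: b h1 h2.
by apply: submx_trans (submxMr _ (MJ_L i)) _; case: b h1 h2.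
Qed.

Lemma sw_fold s : forall b A, sw b A ->
  sw (b (+) odd (size s)) (foldl (fun acc i => J i *m acc) A s).
Proof.
elim: s => [|i s IH] b A H /=; first by rewrite addbF.
by have := IH _ _ (sw_step i H); rewrite addNb addbN.
Qed.

Lemma sw_tr0 K : sw true K -> \tr K = 0.
Proof.
case/andP=> /= h1 h2.
set P := proj_mx L M; set Q := 1%:M - P.
have PL : (P <= L)%MS by have := proj_mx_sub L M 1%:M; rewrite mul1mx.
have QM : (Q <= M)%MS.
  have := proj_mx_compl_sub (W := 1%:M) (submx_full _ fullLM).
  by rewrite mul1mx.
have PP : P *m P = P by apply: proj_mx_id PL; exact: capLM.
have QQ : Q *m Q = Q by rewrite {2}/Q mulmxBr mulmx1 proj_mx_0 ?subr0 //; exact: capLM.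
have PKP : P *m K *m P = 0.
  apply: proj_mx_0; first exact: capLM.
  exact: submx_trans (submxMr _ PL) h1.
have QKQ : Q *m K *m Q = 0.
  rewrite {2}/Q mulmxBr mulmx1 proj_mx_id ?subrr //; first exact: capLM.
  exact: submx_trans (submxMr _ QM) h2.
have -> : K = P *m K + Q *m K by rewrite -mulmxDl /Q addrC subrK mul1mx.
clearbody Q P.
have t1 : \tr (P *m K) = 0.
  by rewrite -{1}PP -mulmxA mxtrace_mulC PKP mxtrace0.
have t2 : \tr (Q *m K) = 0.
  by rewrite -{1}QQ -mulmxA mxtrace_mulC QKQ mxtrace0.
by rewrite mxtraceD t1 t2 addr0.
Qed.

Lemma Lag_tr0 : odd m -> \tr (Kmat J) = 0.
Proof.
move=> om; apply: sw_tr0.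
have := sw_fold (enum 'I_m) (b := false) (A := 1%:M).
rewrite size_enum_ord om /=; apply.
by rewrite /sw !mulmx1 !submx_refl.
Qed.

End PartA.


Section SumRep.
Variables (R : realType) (m d e p q : nat).

Lemma mxdiag_mulc k r (A B : 'M[R]_k) :
  mxdiag (fun _ : 'I_r => A) *m mxdiag (fun _ : 'I_r => B) = mxdiag (fun _ : 'I_r => A *m B).
Proof.
rewrite {2}/mxdiag mul_mxdiag_mxblock /mxdiag; apply/eq_mxblock => i j.
by case: (i == j); rewrite ?conform_mx_id ?mulmx0.
Qed.

Definition blk (A : 'M[R]_d) (B : 'M[R]_e) : 'M[R]_(sum_dim d e p q) :=
  block_mx (mxdiag (fun _ : 'I_p => A)) 0 0 (mxdiag (fun _ : 'I_q => B)).

Lemma blk_mul A B A' B' : blk A B *m blk A' B' = blk (A *m A') (B *m B').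
Proof.
by rewrite /blk mulmx_block !mulmx0 !mul0mx !addr0 !add0r !mxdiag_mulc.
Qed.

Lemma blk_add A B A' B' : blk A B + blk A' B' = blk (A + A') (B + B').
Proof. by rewrite /blk add_block_mx !addr0 -!mxdiagD. Qed.

Lemma blk_scalar (c : R) : blk c%:M c%:M = c%:M.
Proof. by rewrite /blk !mxdiagZ -scalar_mx_block. Qed.

Lemma blk_tr A B : (blk A B)^T = blk A^T B^T.
Proof. by rewrite /blk tr_block_mx !trmx0 !tr_mxdiag. Qed.

Lemma blk_opp A B : blk (- A) (- B) = - blk A B.
Proof. by rewrite /blk opp_block_mx !oppr0 !mxdiagN. Qed.

Variables (Jp : 'I_m -> 'M[R]_d) (Jm : 'I_m -> 'M[R]_e).

Lemma sum_rep_cliff : clifford_rel Jp -> clifford_rel Jm ->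
  clifford_rel (sum_rep Jp Jm p q).
Proof.
move=> cp cm i j; rewrite /sum_rep -/(blk (Jp i) (Jm i)) -/(blk (Jp j) (Jm j)).
by rewrite !blk_mul blk_add cp cm !scalemx1 blk_opp blk_scalar.
Qed.

Lemma sum_rep_skew : skew_rep Jp -> skew_rep Jm -> skew_rep (sum_rep Jp Jm p q).
Proof.
move=> sp sm i; rewrite /sum_rep -/(blk (Jp i) (Jm i)).
by rewrite blk_tr sp sm blk_opp.
Qed.

Lemma Kmat_sum : Kmat (sum_rep Jp Jm p q) = blk (Kmat Jp) (Kmat Jm).
Proof.
rewrite /Kmat -(blk_scalar 1); move: (1%:M : 'M[R]_d) (1%:M : 'M[R]_e).
elim: (enum 'I_m) => [|i s IH] A B //=.
by rewrite -IH /sum_rep -/(blk (Jp i) (Jm i)) blk_mul.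
Qed.

Lemma tr_blk_pm : \tr (blk 1%:M (- 1%:M)) = (d * p)%:R - (e * q)%:R.
Proof.
rewrite /blk mxtrace_block mxdiagN mxdiagZ raddfN /= !mxtrace1.
by rewrite mxdiagZ mxtrace1 !big_const_ord !iter_addn_0.
Qed.

End SumRep.

Unset Implicit Arguments. Set Strict Implicit.

Theorem proposition5p7 (R : realType) (m : nat) (hm : (m %% 8 = 3)%N)
  (d e : nat) (Jp : 'I_m -> 'M[R]_d) (Jm : 'I_m -> 'M[R]_e)
  (hJp : irr_module_sign Jp true) (hJm : irr_module_sign Jm false)
  (p q : nat) :
  Lag_nonempty (sum_rep Jp Jm p q) -> p = q.
Proof.
move=> [L lagL].
have om : odd m.
  by have := divn_eq m 8; rewrite hm => ->; rewrite oddD oddM andbF.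
have m0 : (0 < m)%N by move: om; case: (m).
have de := dim_eq om hJp hJm.
case: hJp => [[cp sp] [[d0 _] Kp]]; case: hJm => [[cm sm] [_ Km]].
have := Lag_tr0 (sum_rep_cliff p q cp cm) (sum_rep_skew p q sp sm) (Ordinal m0) lagL om.
rewrite Kmat_sum Kp Km tr_blk_pm => /eqP; rewrite subr_eq0 eqr_nat => /eqP.
subst e => H; apply/eqP; by rewrite -(eqn_pmul2l d0) H.
Qed.
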